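(* In the setting of the sensorless induction machine (scaled model with state $(\tilde i_{s\alpha},\tilde i_{s\beta},\tilde\psi_{r\alpha},\tilde\psi_{r\beta},\omega_e,T_r)$, output $\tilde{\mathcal{I}}_s$, and $6\times6$ observability matrix $\mathcal{O}(x)$ formed from the gradients of $\tilde{\mathcal{I}}_s$, $\mathcal{L}_f\tilde{\mathcal{I}}_s$, $\mathcal{L}_f^2\tilde{\mathcal{I}}_s$), assume the rotor flux $\Psi_r=(\psi_{r\alpha},\psi_{r\beta})$ is nonzero and let $\omega_s=\frac{d}{dt}\angle\Psi_r=\frac{d}{dt}\arctan\frac{\psi_{r\beta}}{\psi_{r\alpha}}$ be the angular velocity of the rotor flux vector (along the model). Then $\det\mathcal{O}(x)\neq0$ if and only if $$\frac{d}{dt}\arctan(\tau_r\omega_e)+\omega_s\neq0 .$$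
   Context: Scaled model: $\dot{\tilde{\mathcal{I}}}_s=\mathcal{V}_s+a\tilde{\mathcal{I}}_s+\gamma\tilde\Psi_r$, $\dot{\tilde\Psi}_r=-\gamma\tilde\Psi_r-(a-b)\tilde{\mathcal{I}}_s$, $\dot\omega_e=\frac{c}{J}\tilde{\mathcal{I}}_s^T\mathbf{J}_2\tilde\Psi_r-\frac{p}{J}T_r$, $\dot T_r=0$, with $\gamma=\frac{1}{\tau_r}\mathbf{I}_2-\omega_e\mathbf{J}_2$, $\mathbf{J}_2=\begin{bmatrix}0&-1\\1&0\end{bmatrix}$, $a=-R_\sigma/L_\sigma$, $b=-R_s/L_\sigma$, $c=p^2/L_\sigma$, $\tau_r=L_r/R_r>0$, $\tilde\Psi_r=k_r\Psi_r$, $\tilde{\mathcal{I}}_s=L_\sigma\mathcal{I}_s$, $p,J>0$. The rows of $\mathcal{O}(x)$ are the gradients, with respect to the state, of $\tilde i_{s\alpha},\tilde i_{s\beta}$ and of their first and second Lie derivatives along the model; $\frac{d}{dt}\arctan(\tau_r\omega_e)=\frac{\tau_r\dot\omega_e}{1+\tau_r^2\omega_e^2}$. *)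

(* Defs.v *)
From Stdlib Require Import Reals ClassicalEpsilon.
Open Scope R_scope.

(* A state x = (i_sa, i_sb, psi_ra, psi_rb, omega_e, T_r) of the scaled model
   is encoded as  x : nat -> R  with components x 0, ..., x 5
   (scaled stator current, scaled rotor flux, electrical speed, load torque).
   Components with index >= 6 are irrelevant. *)
Definition vec := nat -> R.

Definition upd (x : vec) (j : nat) (t : R) : vec :=
  fun k => if Nat.eqb k j then t else x k.

Definition deriv_at (g : R -> R) (t : R) : R :=
  epsilon (inhabits 0) (fun l => derivable_pt_lim g t l).

Definition partial (h : vec -> R) (j : nat) (x : vec) : R :=
  deriv_at (fun t => h (upd x j t)) (x j).

Definition lie (f : vec -> vec) (h : vec -> R) (x : vec) : R :=
  sum_f_R0 (fun j => partial h j x * f x j) 5.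

(* Scaled induction-machine model
     d/dt I  = V + a I + gamma Psi
     d/dt Psi = - gamma Psi - (a - b) I
     d/dt w  = c/J I^T J2 Psi - p/J T
     d/dt T  = 0
   with gamma = (1/tau_r) I_2 - w J2, J2 = [[0,-1],[1,0]],
   so J2 (u1,u2) = (-u2, u1), and (gamma Psi) = (psa/tau_r + w psb, psb/tau_r - w psa).
   The input V = (v1, v2) is a (known) constant input. *)
Definition im_field (a b c p J tau_r v1 v2 : R) (x : vec) : vec :=
  let isa := x 0%nat in let isb := x 1%nat in
  let psa := x 2%nat in let psb := x 3%nat in
  let w := x 4%nat in let T := x 5%nat in
  let gpa := psa / tau_r - w * (- psb) in
  let gpb := psb / tau_r - w * psa in
  fun k => match k with
  | 0%nat => v1 + a * isa + gpa
  | 1%nat => v2 + a * isb + gpb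
  | 2%nat => - gpa - (a - b) * isa
  | 3%nat => - gpb - (a - b) * isb
  | 4%nat => c / J * (isa * (- psb) + isb * psa) - p / J * T
  | _ => 0
  end.

Definition coord (j : nat) : vec -> R := fun x => x j.

Definition obs_fun (f : vec -> vec) (i : nat) : vec -> R :=
  match i with
  | 0%nat => coord 0
  | 1%nat => coord 1
  | 2%nat => lie f (coord 0)
  | 3%nat => lie f (coord 1)
  | 4%nat => lie f (lie f (coord 0))
  | _ => lie f (lie f (coord 1))
  end.

Definition obs_matrix (f : vec -> vec) (x : vec) : nat -> nat -> R :=
  fun i j => partial (obs_fun f i) j x.

Definition minor (M : nat -> nat -> R) (j : nat) : nat -> nat -> R :=
  fun r c => M (S r) (if Nat.ltb c j then c else S c).

Fixpoint det (n : nat) (M : nat -> nat -> R) : R :=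
  match n with
  | O => 1
  | S n' => sum_f_R0 (fun j => (-1) ^ j * M O j * det n' (minor M j)) n'
  end.

Definition dt_atan_tau_w (f : vec -> vec) (tau_r : R) (x : vec) : R :=
  lie f (fun y => atan (tau_r * y 4%nat)) x.

(* angular velocity of the rotor flux vector along the model:
   w_s = d/dt angle(Psi) = (psa * d/dt psb - psb * d/dt psa) / (psa^2 + psb^2)
   (= d/dt arctan(psb/psa) wherever psa <> 0). *)
Definition omega_s (f : vec -> vec) (x : vec) : R :=
  (x 2%nat * lie f (coord 3) x - x 3%nat * lie f (coord 2) x)
  / (x 2%nat ^ 2 + x 3%nat ^ 2).

(* Main.v *)
Require Import Defs.
From Stdlib Require Import Reals ClassicalEpsilon FunctionalExtensionality.
From Stdlib Require Import Lia Lra Psatz.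
From Coquelicot Require Import Coquelicot.
Open Scope R_scope.

Lemma partial_eq h j x l :
  is_derive (fun t => h (upd x j t)) (x j) l -> partial h j x = l.
Proof.
  intro H. apply is_derive_Reals in H.
  unfold partial, deriv_at.
  apply (uniqueness_limite (fun t => h (upd x j t)) (x j)); [|exact H].
  apply (epsilon_spec (inhabits 0) (fun l => derivable_pt_lim (fun t => h (upd x j t)) (x j) l)).
  exists l; exact H.
Qed.

Lemma sum_first n (g : nat -> R) : (forall j, (0 < j <= n)%nat -> g j = 0) -> sum_f_R0 g n = g 0%nat.
Proof. induction n; intros H; simpl; auto. rewrite IHn by (intros; apply H; lia). rewrite (H (S n)) by lia. ring. Qed.

Lemma det_row0 n M : (forall j, (0 < j <= n)%nat -> M 0%nat j = 0) ->
  det (S n) M = M 0%nat 0%nat * det n (minor M 0).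
Proof. intro H. simpl det. rewrite sum_first. simpl; ring.
  intros j Hj. rewrite H by exact Hj. ring. Qed.

Ltac dtac := cbv beta iota zeta delta [upd im_field coord Nat.eqb];
  auto_derive; repeat first [exact I | reflexivity | split].

Ltac rwpart := repeat match goal with |- context [partial ?h ?j ?x] =>
   erewrite (partial_eq h j x) by dtac end.

Section S.
Variables a b c p J tau v1 v2 : R.
Let f := im_field a b c p J tau v1 v2.

Lemma lie0 : lie f (coord 0) = fun y => f y 0%nat.
Proof. apply functional_extensionality; intro y. unfold lie. simpl sum_f_R0.
  rwpart. unfold f, im_field. ring. Qed.
Lemma lie1 : lie f (coord 1) = fun y => f y 1%nat.
Proof. apply functional_extensionality; intro y. unfold lie. simpl sum_f_R0.
  rwpart. unfold f, im_field. ring. Qed.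
Lemma lie3 : lie f (coord 3) = fun y => f y 3%nat.
Proof. apply functional_extensionality; intro y. unfold lie. simpl sum_f_R0.
  rwpart. unfold f, im_field. ring. Qed.
Lemma lie2 : lie f (coord 2) = fun y => f y 2%nat.
Proof. apply functional_extensionality; intro y. unfold lie. simpl sum_f_R0.
  rwpart. unfold f, im_field. ring. Qed.

Hypothesis tau0 : tau <> 0.
Hypothesis J0 : J <> 0.

Lemma lie4 : lie f (fun y => f y 0%nat) =
  fun y => a * f y 0%nat + (1/tau) * f y 2%nat + y 4%nat * f y 3%nat + y 3%nat * f y 4%nat.
Proof. apply functional_extensionality; intro y. unfold lie. simpl sum_f_R0.
  unfold f. rwpart. unfold im_field. field; split; auto. Qed.
Lemma lie5 : lie f (fun y => f y 1%nat) =
  fun y => a * f y 1%nat - y 4%nat * f y 2%nat + (1/tau) * f y 3%nat - y 2%nat * f y 4%nat.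
Proof. apply functional_extensionality; intro y. unfold lie. simpl sum_f_R0.
  unfold f. rwpart. unfold im_field. field; split; auto. Qed.

Lemma obs0 x j : (0 < j <= 5)%nat -> obs_matrix f x 0 j = 0.
Proof. intro Hj. destruct j as [|[|[|[|[|[|j]]]]]]; try (exfalso; lia);
  unfold obs_matrix; simpl obs_fun; rwpart; reflexivity. Qed.
Lemma obs1 x j : (0 < j <= 4)%nat -> obs_matrix f x 1 (S j) = 0.
Proof. intro Hj. destruct j as [|[|[|[|[|j]]]]]; try (exfalso; lia);
  unfold obs_matrix; simpl obs_fun; rwpart; reflexivity. Qed.
Lemma obs00 x : obs_matrix f x 0 0 = 1.
Proof. unfold obs_matrix; simpl obs_fun; rwpart; reflexivity. Qed.
Lemma obs11 x : obs_matrix f x 1 1 = 1.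
Proof. unfold obs_matrix; simpl obs_fun; rwpart; reflexivity. Qed.

Lemma final x : x 2%nat ^2 + x 3%nat ^2 <> 0 -> det 4 (fun r c => obs_matrix f x (S (S r)) (S (S c))) =
  (p / J) * (1/tau^2 + x 4%nat ^2) * (x 2%nat ^2 + x 3%nat ^2) *
   (dt_atan_tau_w f tau x + omega_s f x).
Proof.
  intro Hps.
  cbv beta iota delta [det minor Nat.ltb Nat.leb sum_f_R0 pow]. unfold obs_matrix, obs_fun. rewrite lie0, lie1, lie4, lie5.
  unfold dt_atan_tau_w, omega_s. rewrite lie2, lie3. unfold lie. simpl sum_f_R0.
  unfold f. rwpart. unfold im_field.
  field. repeat split; auto.
  assert (0 <= tau * x 4%nat * (tau * x 4%nat)) by nra. lra. Qed.

Lemma det6 x : det 6 (obs_matrix f x) = det 4 (fun r c => obs_matrix f x (S (S r)) (S (S c))).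
Proof.
  rewrite det_row0 by (intros; apply obs0; lia).
  rewrite obs00, Rmult_1_l.
  rewrite det_row0.
  2:{ intros j Hj. unfold minor. simpl. destruct j; [lia|]. apply obs1; lia. }
  unfold minor at 1. simpl. rewrite obs11, Rmult_1_l. reflexivity.
Qed.
End S.

Theorem mainTheorem8 :
  forall (R_sigma L_sigma R_s p J tau_r v1 v2 : R) (x : vec),
    0 < L_sigma -> 0 < p -> 0 < J -> 0 < tau_r ->
    let a := - R_sigma / L_sigma in
    let b := - R_s / L_sigma in
    let c := p ^ 2 / L_sigma in
    let f := im_field a b c p J tau_r v1 v2 in
    (x 2%nat <> 0 \/ x 3%nat <> 0) ->
    (det 6 (obs_matrix f x) <> 0 <->
     dt_atan_tau_w f tau_r x + omega_s f x <> 0).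
Proof.
  intros RS LS Rs p J tau v1 v2 x HL Hp HJ Ht a b c f Hx.
  assert (Hps : x 2%nat ^2 + x 3%nat ^2 <> 0).
  { destruct Hx as [H|H]; [assert (0 < x 2%nat ^2) by (apply pow2_gt_0; auto) |
      assert (0 < x 3%nat ^2) by (apply pow2_gt_0; auto)];
    assert (0 <= x 2%nat ^2) by apply pow2_ge_0; assert (0 <= x 3%nat ^2) by apply pow2_ge_0; lra. }
  unfold f. rewrite det6, final; try lra; auto.
  assert (K : p / J * (1 / tau ^ 2 + x 4%nat ^ 2) * (x 2%nat ^ 2 + x 3%nat ^ 2) <> 0).
  { assert (0 < p / J) by (apply Rdiv_lt_0_compat; lra).
    assert (0 < 1 / tau ^ 2) by (apply Rdiv_lt_0_compat; [lra| apply pow_lt; lra]).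
    assert (0 <= x 4%nat ^2) by apply pow2_ge_0.
    assert (0 < x 2%nat ^ 2 + x 3%nat ^ 2) by (assert (0 <= x 2%nat ^2) by apply pow2_ge_0; assert (0 <= x 3%nat ^2) by apply pow2_ge_0; lra).
    apply Rmult_integral_contrapositive_currified; [|lra].
    apply Rmult_integral_contrapositive_currified; lra. }
  split; intros H1 H2.
  - apply H1. rewrite H2. ring.
  - apply Rmult_integral in H2. destruct H2; auto.
Qed.
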